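(* Let $k\ge 2$ and $n\ge 1$ be integers, $E=\{0,\dots,k-1\}$, and let $L_n\subseteq E^n$ and $\varphi:L_n\to E^{n-1}$ be as defined in the context. Then $\varphi$ is a bijection, and for every $A\subseteq L_n$, $A$ is an intersecting antichain in $E^n$ if and only if $\varphi(A)$ is an intersecting antichain in $E^{n-1}$ (equivalently, both $\varphi$ and $\varphi^{-1}$ map intersecting antichains to intersecting antichains).
   Context: For $\mathbf a=(a_1,\dots,a_m),\mathbf b=(b_1,\dots,b_m)\in E^m$ write $\mathbf a\preceq\mathbf b$ if $a_i\le b_i$ for all $i$. A set $A\subseteq E^m$ is an antichain if there are no distinct $\mathbf a,\mathbf b\in A$ with $\mathbf a\preceq\mathbf b$. A set $A\subseteq E^m$ is intersecting if for all $\mathbf a,\mathbf b\in A$ (including $\mathbf a=\mathbf b$) there is $i$ with $a_i+b_i\ge k$. The weight is $w(\mathbf a)=a_1+\dots+a_m$, and $\mathcal B_t=\{\mathbf a\in E^n: w(\mathbf a)=t\}$. Let $g=\lfloor n(k-1)/2\rfloor$ and $C_i=\{\mathbf a\in E^n: a_1=i\}$. Define $L_n=(\mathcal B_0\cup\dots\cup\mathcal B_g)\cap(C_0\cup C_{k-1})$ if $n(k-1)$ is odd, and $L_n=((\mathcal B_0\cup\dots\cup\mathcal B_{g-1})\cap(C_0\cup C_{k-1}))\cup(\mathcal B_g\cap C_0)$ if $n(k-1)$ is even. For $a\in E$ let $\overline a=k-1-a$. Define $\varphi(a_1,\dots,a_n)=(a_2,\dots,a_n)$ if $a_1=0$, and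 $\varphi(a_1,\dots,a_n)=(\overline{a}_2,\dots,\overline{a}_n)$ if $a_1=k-1$. *)

(* Defs.v *)
(* E = 'I_k, E^n = {ffun 'I_n -> 'I_k}; coordinate a_{i+1} is a i. *)
From mathcomp Require Import all_boot.
Set Implicit Arguments. Unset Strict Implicit. Unset Printing Implicit Defensive.

Definition vec (k n : nat) := {ffun 'I_n -> 'I_k}.

Definition vle k n (a b : vec k n) : bool := [forall i, (a i <= b i)%N].

Definition antichain k n (A : {set vec k n}) : Prop :=
  forall a b, a \in A -> b \in A -> a != b -> ~~ vle a b.

Definition intersecting k n (A : {set vec k n}) : Prop :=
  forall a b, a \in A -> b \in A -> exists i : 'I_n, (k <= a i + b i)%N.

Definition weight k n (a : vec k n) : nat := \sum_(i < n) (a i : nat).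

(* the value of coordinate j (0-based) as a nat; 0 if out of range *)
Definition coord k n (a : vec k n) (j : nat) : nat :=
  if @insub nat (fun x => x < n) 'I_n j is Some i then (a i : nat) else 0.

Definition gval k n : nat := (n * (k - 1))./2.

Definition Lset k n : {set vec k n} :=
  [set a : vec k n |
    if odd (n * (k - 1)) then
      (weight a <= gval k n) && ((coord a 0 == 0) || (coord a 0 == k - 1))
    else
      ((weight a < gval k n) && ((coord a 0 == 0) || (coord a 0 == k - 1)))
      || ((weight a == gval k n) && (coord a 0 == 0))].

Lemma succ_lt n (i : 'I_n.-1) : (i.+1 < n)%N.
Proof. case: n i => [|n] [i Hi] //=. Qed.

Definition succ_ord n (i : 'I_n.-1) : 'I_n := Ordinal (succ_lt i).

Definition cmpl k (x : 'I_k) : 'I_k := rev_ord x.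

Definition phi k n (a : vec k n) : vec k n.-1 :=
  [ffun i : 'I_n.-1 => if coord a 0 == 0 then a (succ_ord i) else cmpl (a (succ_ord i))].

(* Main.v *)
Require Import Defs.
From mathcomp Require Import all_boot zify.
Set Implicit Arguments. Unset Strict Implicit. Unset Printing Implicit Defensive.

Definition tl k m (a : vec k m.+1) : vec k m := [ffun i => a (lift ord0 i)].
Definition cv k m (x : vec k m) : vec k m := [ffun i => cmpl (x i)].
Definition ib k m (a b : vec k m) : bool := [exists i, k <= a i + b i].
Definition Sp k m (a b : vec k m) : bool :=
  [&& ib a b, (a != b) ==> ~~ vle a b & (b != a) ==> ~~ vle b a].

Lemma coord0 k m (a : vec k m.+1) : coord a 0 = a ord0.
Proof.
rewrite /coord; case: insubP => [i _ Hi|] //=.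
by congr (nat_of_ord (a _)); apply: val_inj.
Qed.

Lemma phiE k m (a : vec k m.+1) :
  phi a = if (a ord0 : nat) == 0 then tl a else cv (tl a).
Proof.
apply/ffunP=> i; rewrite !ffunE coord0.
have ->: succ_ord i = lift ord0 i by apply: val_inj.
by case: ifP => _; rewrite !ffunE.
Qed.

Lemma wE k m (a : vec k m.+1) : weight a = a ord0 + weight (tl a).
Proof.
rewrite /weight big_ord_recl; congr (_ + _); apply: eq_bigr => i _; by rewrite ffunE.
Qed.

Lemma w_cv k m (x : vec k m) : weight (cv x) + weight x = m * (k-1).
Proof.
rewrite /weight -big_split /=.
rewrite (eq_bigr (fun _ => k-1)) ?sum_nat_const ?card_ord //.
move=> i _; rewrite ffunE /cmpl /=. have := ltn_ord (x i); lia.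
Qed.

Lemma cvK k m : involutive (@cv k m).
Proof. move=> x; apply/ffunP=> i; by rewrite !ffunE /cmpl rev_ordK. Qed.

Lemma vle_w k m (x y : vec k m) : vle x y -> weight x <= weight y.
Proof. move/forallP=> H; apply: leq_sum => i _; exact: H. Qed.

Lemma ib_w k m (x y : vec k m) : m * (k-1) < weight x + weight y -> ib x y.
Proof.
move=> H; apply: contraTT H => /existsPn Hn; rewrite -leqNgt /weight -big_split /=.
have -> : m * (k-1) = \sum_(i < m) (k-1) by rewrite sum_nat_const card_ord.
apply: leq_sum => i _; have := Hn i; lia.
Qed.

Lemma ib_vle k m (x y : vec k m) : ib x y = ~~ vle x (cv y).
Proof.
rewrite /ib /vle negb_forall; apply: eq_existsb => i; rewrite ffunE /cmpl /=.
have := ltn_ord (y i); lia.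
Qed.

Lemma ib_sym k m (x y : vec k m) : ib x y = ib y x.
Proof. by apply: eq_existsb => i; rewrite addnC. Qed.

Lemma ib_split k m (a b : vec k m.+1) :
  ib a b = (k <= a ord0 + b ord0) || ib (tl a) (tl b).
Proof.
apply/existsP/orP => [[i Hi]|[H|/existsP [j Hj]]].
- case: (unliftP ord0 i) => [j Ej|Ej]; rewrite Ej in Hi; [right|by left].
  by apply/existsP; exists j; rewrite !ffunE.
- by exists ord0.
- by exists (lift ord0 j); rewrite !ffunE in Hj.
Qed.

Lemma vle_split k m (a b : vec k m.+1) :
  vle a b = (a ord0 <= b ord0) && vle (tl a) (tl b).
Proof.
apply/forallP/andP => [H|[H0 /forallP H] i].
  split; first exact: H. by apply/forallP => j; rewrite !ffunE; exact: H.
case: (unliftP ord0 i) => [j ->|->] //. by have := H j; rewrite !ffunE.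
Qed.

Lemma vle_cv k m (x y : vec k m) : vle (cv x) (cv y) = vle y x.
Proof.
apply: eq_forallb => i; rewrite !ffunE /cmpl /=.
have := ltn_ord (x i); have := ltn_ord (y i); lia.
Qed.

Lemma vle_refl k m (x : vec k m) : vle x x.
Proof. by apply/forallP. Qed.

Lemma tl_inj k m (a b : vec k m.+1) : a ord0 = b ord0 -> tl a = tl b -> a = b.
Proof.
move=> H0 Ht; apply/ffunP => i; case: (unliftP ord0 i) => [j ->|->] //.
by have := congr1 (fun f : vec k m => f j) Ht; rewrite !ffunE.
Qed.

Lemma tl_eq k m (a b : vec k m.+1) : (a ord0 : nat) = b ord0 -> (a == b) = (tl a == tl b).
Proof.
move=> H; apply/eqP/eqP => [->//|]; apply: tl_inj; exact: val_inj.
Qed.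

Lemma LmemP k m (a : vec k m.+1) : (2 <= k) ->
  a \in Lset k m.+1 <->
  ((a ord0 : nat) = 0 /\ 2 * weight a <= m.+1 * (k-1)) \/
  ((a ord0 : nat) = k-1 /\ 2 * weight a < m.+1 * (k-1)).
Proof.
move=> hk; rewrite inE coord0 /gval.
set N := m.+1 * (k-1). set w := weight a.
have := odd_double_half N. case: (odd N) => /= HN; split => H; lia.
Qed.

Lemma Sp_sym k m (a b : vec k m) : Sp a b = Sp b a.
Proof. by rewrite /Sp ib_sym; case: (ib b a); case: (_ ==> _); case: (_ ==> _). Qed.

Lemma Smix k m (hk : 2 <= k) (a b : vec k m.+1) :
  (a ord0 : nat) = 0 -> 2 * weight a <= m.+1 * (k-1) ->
  (b ord0 : nat) = k-1 -> 2 * weight b < m.+1 * (k-1) ->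
  Sp a b = Sp (phi a) (phi b).
Proof.
move=> Ha wa Hb wb.
rewrite (phiE a) (phiE b) Ha Hb eqxx.
have -> : (k - 1 == 0) = false by apply/eqP; lia.
set ta := tl a; set tb := tl b.
have wa' : weight a = weight ta by rewrite wE Ha.
have wb' : weight b = k-1 + weight tb by rewrite wE Hb.
have wc := w_cv tb.
rewrite (mulSn m) in wa wb.
have npb : ~~ vle (cv tb) ta by apply/negP => /vle_w; lia.
have neq : a != b by apply/eqP => E; move: Ha; rewrite E Hb; lia.
have neq' : ta != cv tb by apply/eqP=> E; move: npb; rewrite -E vle_refl.
rewrite /Sp ib_split vle_split (vle_split b a) Ha Hb neq eq_sym neq neq' eq_sym neq' npb /=.
rewrite (ib_vle ta tb) (ib_vle ta (cv tb)) cvK.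
have -> : (k <= k - 1) = false by lia.
have -> : (k - 1 <= 0) = false by lia.
by rewrite /ta /tb; case: (vle (tl a) (cv (tl b))); case: (vle (tl a) (tl b)).
Qed.

Lemma S_phi k m (hk : 2 <= k) (a b : vec k m.+1) :
  a \in Lset k m.+1 -> b \in Lset k m.+1 -> Sp a b = Sp (phi a) (phi b).
Proof.
move=> /(LmemP _ hk) [[Ha wa]|[Ha wa]] /(LmemP _ hk) [[Hb wb]|[Hb wb]].
- have E : (a ord0 : nat) = b ord0 by rewrite Ha Hb.
  rewrite (phiE a) (phiE b) Ha Hb eqxx /Sp ib_split !vle_split Ha Hb /=.
  have E1 := tl_eq E. have E2 : (b == a) = (tl b == tl a) by rewrite eq_sym E1 eq_sym. have -> : (k <= 0 + 0) = false by lia. by rewrite E1 E2.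
- exact: Smix.
- by rewrite Sp_sym Smix // Sp_sym.
- have E : (a ord0 : nat) = b ord0 by rewrite Ha Hb.
  rewrite (phiE a) (phiE b) Ha Hb.
  have -> : (k - 1 == 0) = false by apply/eqP; lia.
  have wa' := wE a; have wb' := wE b.
  have wca := w_cv (tl a); have wcb := w_cv (tl b).
  rewrite (mulSn m) in wa wb.
  have I1 : ib (cv (tl a)) (cv (tl b)) by apply: ib_w; lia.
  have I2 : ib a b by rewrite ib_split Ha Hb; apply/orP; left; lia.
  rewrite /Sp I1 I2 !vle_split Ha Hb leqnn /= !vle_cv.
  have E1 := tl_eq E. have E2 : (b == a) = (tl b == tl a) by rewrite eq_sym E1 eq_sym.
  rewrite E1 E2 !(can_eq (@cvK k m)) andbC.
  by congr (_ && _); rewrite eq_sym.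
Qed.

Lemma IA_S k m (B : {set vec k m}) :
  intersecting B /\ antichain B <-> (forall a b, a \in B -> b \in B -> Sp a b).
Proof.
split.
- move=> [HI HA] a b Ha Hb; apply/and3P; split.
  + by apply/existsP; exact: HI.
  + by apply/implyP => Hab; exact: HA.
  + by apply/implyP => Hba; exact: HA.
- move=> H; split.
  + by move=> a b Ha Hb; have /and3P[/existsP ? _ _] := H a b Ha Hb.
  + move=> a b Ha Hb Hab; have /and3P[_ /implyP Hi _] := H a b Ha Hb; exact: Hi.
Qed.

Definition ext k m (x : 'I_k) (b : vec k m) : vec k m.+1 :=
  [ffun i => if unlift ord0 i is Some j then b j else x].

Lemma ext0 k m (x : 'I_k) (b : vec k m) : ext x b ord0 = x.
Proof. by rewrite ffunE unlift_none. Qed.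

Lemma ext_tl k m (x : 'I_k) (b : vec k m) : tl (ext x b) = b.
Proof. by apply/ffunP => i; rewrite !ffunE liftK. Qed.

Theorem theorem1 (k n : nat) (hk : (2 <= k)%N) (hn : (1 <= n)%N) :
  (forall a1 a2 : vec k n, a1 \in Lset k n -> a2 \in Lset k n ->
      phi a1 = phi a2 -> a1 = a2) /\
  (forall b : vec k n.-1, exists2 a : vec k n, a \in Lset k n & phi a = b) /\
  (forall A : {set vec k n}, A \subset Lset k n ->
      (intersecting A /\ antichain A <->
       intersecting (@phi k n @: A) /\ antichain (@phi k n @: A))).
Proof.
case: n hn => // m _ /=.
have k10 : (k - 1 == 0) = false by apply/eqP; lia.
split; [|split].
- move=> a1 a2 /(LmemP _ hk) [[H1 w1]|[H1 w1]] /(LmemP _ hk) [[H2 w2]|[H2 w2]];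
    rewrite (phiE a1) (phiE a2) => E;
    rewrite ?H1 ?H2 ?eqxx ?k10 in E.
  + have E0 : a1 ord0 = a2 ord0 by apply: ord_inj; rewrite H1 H2.
    exact: (tl_inj E0 E).
  + have := w_cv (tl a2); rewrite -E; have := wE a1; have := wE a2.
    rewrite (mulSn m) in w1 w2; lia.
  + have := w_cv (tl a1); rewrite E; have := wE a1; have := wE a2.
    rewrite (mulSn m) in w1 w2; lia.
  + have E0 : a1 ord0 = a2 ord0 by apply: ord_inj; rewrite H1 H2.
    by apply: (tl_inj E0); rewrite -(cvK (tl a1)) E cvK.
- move=> b.
  have k0 : 0 < k by lia.
  have k1 : k - 1 < k by lia.
  have wc := w_cv b.
  case: (leqP (2 * weight b) (m.+1 * (k - 1))) => Hw.
  + exists (ext (Ordinal k0) b).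
      apply/(LmemP _ hk); left; rewrite wE ext0 ext_tl; split => //.
    by rewrite phiE ext0 /= ext_tl.
  + exists (ext (Ordinal k1) (cv b)).
      apply/(LmemP _ hk); right; rewrite wE ext0 ext_tl /=; split => //.
      rewrite (mulSn m) in Hw *; lia.
    by rewrite phiE ext0 /= k10 ext_tl cvK.
- move=> A HA; rewrite !IA_S; split => H.
  + move=> x y /imsetP[a Ha ->] /imsetP[b Hb ->].
    rewrite -S_phi //; [exact: H | exact: (subsetP HA) | exact: (subsetP HA)].
  + move=> a b Ha Hb; rewrite S_phi //;
      [by apply: H; apply: imset_f | exact: (subsetP HA) | exact: (subsetP HA)].
Qed.
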